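(* Let $X$ be an admissible complete CAT(1) space and $T\colon X\to X$ a vicinal mapping. Then $\mathrm{Fix}(T)$ is nonempty if and only if there exists $x\in X$ such that the sequence $\{T^nx\}$ is spherically bounded and $\sup_{n\in\mathbb N} d(T^nx,T^{n-1}x)<\pi/2$.
   Context: A CAT(1) space is a $\pi$-geodesic metric space in which every geodesic triangle of perimeter $<2\pi$ satisfies the CAT(1) comparison inequality relative to its comparison triangle in the unit sphere $\mathbb S^2$ with spherical metric. It is admissible if $d(v,v')<\pi/2$ for all $v,v'\in X$. A sequence $\{x_n\}$ is spherically bounded if $\inf_{y\in X}\limsup_{n\to\infty} d(x_n,y)<\pi/2$. $\mathrm{Fix}(T)=\{u: Tu=u\}$. With $C_z=\cos d(Tz,z)$, $T$ is vicinal if for all $x,y\in X$: $\bigl(C_x^2(1+C_y^2)+C_y^2(1+C_x^2)\bigr)\cos d(Tx,Ty)\ge C_x^2(1+C_y^2)\cos d(Tx,y)+C_y^2(1+C_x^2)\cos d(Ty,x)$. *)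

(* Defs.v *)
From Stdlib Require Import Reals.
Open Scope R_scope.

Definition is_metric {X : Type} (d : X -> X -> R) : Prop :=
  (forall x y, 0 <= d x y) /\
  (forall x y, d x y = 0 <-> x = y) /\
  (forall x y, d x y = d y x) /\
  (forall x y z, d x z <= d x y + d y z).

Definition geodesic {X : Type} (d : X -> X -> R) (c : R -> X) (x y : X) : Prop :=
  c 0 = x /\ c (d x y) = y /\
  forall s t, 0 <= s <= d x y -> 0 <= t <= d x y -> d (c s) (c t) = Rabs (s - t).

Definition pi_geodesic {X : Type} (d : X -> X -> R) : Prop :=
  forall x y, d x y < PI -> exists c, geodesic d c x y.

Definition R3 : Type := (R * R * R)%type.
Definition dot3 (a b : R3) : R :=
  let '(a1, a2, a3) := a in let '(b1, b2, b3) := b in a1 * b1 + a2 * b2 + a3 * b3.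
Definition on_S2 (a : R3) : Prop := dot3 a a = 1.
Definition dS2 (a b : R3) : R := acos (dot3 a b).

(** ub is the comparison point, on the S^2-side from ab to bb (of length L),
    at distance s from ab. *)
Definition cmp_pt (ab bb : R3) (L s : R) (ub : R3) : Prop :=
  on_S2 ub /\ dS2 ab ub = s /\ dS2 ub bb = L - s.

Definition tri_pt {X : Type} (d : X -> X -> R) (p q r : X) (c1 c2 c3 : R -> X)
    (pb qb rb : R3) (u : X) (ub : R3) : Prop :=
  exists s,
    (0 <= s <= d p q /\ u = c1 s /\ cmp_pt pb qb (d p q) s ub) \/
    (0 <= s <= d q r /\ u = c2 s /\ cmp_pt qb rb (d q r) s ub) \/
    (0 <= s <= d r p /\ u = c3 s /\ cmp_pt rb pb (d r p) s ub).

Definition cat1_inequality {X : Type} (d : X -> X -> R) : Prop :=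
  forall (p q r : X) (c1 c2 c3 : R -> X),
    geodesic d c1 p q -> geodesic d c2 q r -> geodesic d c3 r p ->
    d p q + d q r + d r p < 2 * PI ->
    forall pb qb rb : R3,
      on_S2 pb -> on_S2 qb -> on_S2 rb ->
      dS2 pb qb = d p q -> dS2 qb rb = d q r -> dS2 rb pb = d r p ->
      forall u v ub vb,
        tri_pt d p q r c1 c2 c3 pb qb rb u ub ->
        tri_pt d p q r c1 c2 c3 pb qb rb v vb ->
        d u v <= dS2 ub vb.

Definition CAT1_space {X : Type} (d : X -> X -> R) : Prop :=
  is_metric d /\ pi_geodesic d /\ cat1_inequality d.

Definition admissible {X : Type} (d : X -> X -> R) : Prop :=
  forall v v', d v v' < PI / 2.

Definition complete {X : Type} (d : X -> X -> R) : Prop :=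
  forall xs : nat -> X,
    (forall eps, eps > 0 -> exists N, forall m n, (m >= N)%nat -> (n >= N)%nat ->
        d (xs m) (xs n) < eps) ->
    exists l, forall eps, eps > 0 -> exists N, forall n, (n >= N)%nat -> d (xs n) l < eps.

(** inf_y limsup_n d(x_n, y) < pi/2, written out:
    there is y and c < pi/2 with d(x_n, y) <= c for all large n. *)
Definition spherically_bounded {X : Type} (d : X -> X -> R) (xs : nat -> X) : Prop :=
  exists y c, c < PI / 2 /\ exists N, forall n, (n >= N)%nat -> d (xs n) y <= c.

Definition Fix {X : Type} (T : X -> X) (u : X) : Prop := T u = u.

Definition vicinal {X : Type} (d : X -> X -> R) (T : X -> X) : Prop :=
  forall x y,
    let Cx := cos (d (T x) x) in
    let Cy := cos (d (T y) y) in
    (Cx ^ 2 * (1 + Cy ^ 2) + Cy ^ 2 * (1 + Cx ^ 2)) * cos (d (T x) (T y)) >=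
    Cx ^ 2 * (1 + Cy ^ 2) * cos (d (T x) y) + Cy ^ 2 * (1 + Cx ^ 2) * cos (d (T y) x).

(* Main.v *)
Require Import Defs.
From Stdlib Require Import Reals Lra Psatz IndefiniteDescription Classical.
Open Scope R_scope.

Lemma cos_le_mono a b : 0 <= a -> a <= b -> b <= PI -> cos b <= cos a.
Proof.
  intros. destruct (Req_dec a b) as [->|]; [lra|].
  left; apply cos_decreasing_1; lra.
Qed.

Lemma PI_gt : 0 < PI. Proof. exact PI_RGT_0. Qed.

Lemma cos_pos_half x : 0 <= x < PI/2 -> 0 < cos x.
Proof. intros. apply cos_gt_0; lra. Qed.

Lemma sin_nonneg_half x : 0 <= x < PI/2 -> 0 <= sin x.
Proof. intros. apply sin_ge_0; lra. Qed.

Lemma dot_bound a b : on_S2 a -> on_S2 b -> -1 <= dot3 a b <= 1.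
Proof.
  destruct a as [[a1 a2] a3], b as [[b1 b2] b3]; unfold on_S2, dot3; intros.
  cbn in *. split.
  - pose proof (Rle_0_sqr (a1+b1)); pose proof (Rle_0_sqr (a2+b2)); pose proof (Rle_0_sqr (a3+b3)); unfold Rsqr in *; lra.
  - pose proof (Rle_0_sqr (a1-b1)); pose proof (Rle_0_sqr (a2-b2)); pose proof (Rle_0_sqr (a3-b3)); unfold Rsqr in *; lra.
Qed.

Section Geo.
Variables (X : Type) (d : X -> X -> R).
Hypothesis hcat : CAT1_space d.
Hypothesis hadm : admissible d.

Lemma midpoint_ineq u v : 0 < d u v -> exists m, forall p,
  cos (d p u) + cos (d p v) <= 2 * cos (d u v / 2) * cos (d p m).
Proof.
  destruct hcat as [[hpos [hzero [hsym htri]]] [hgeo hcmp]].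
  intros hg.
  destruct (hgeo u v) as [c1 Hc1]. { pose proof (hadm u v); pose proof PI_gt; lra. }
  exists (c1 (d u v / 2)). intros p.
  set (g := d u v) in *. set (al := d v p). set (be := d p u).
  assert (Hg2 : g < PI/2) by apply hadm.
  assert (Ha2 : al < PI/2) by apply hadm.
  assert (Hb2 : be < PI/2) by apply hadm.
  assert (Ha0 : 0 <= al) by apply hpos. assert (Hb0 : 0 <= be) by apply hpos.
  assert (Hsym1 : d p v = al) by apply hsym.
  assert (Ht1 : al <= g + be) by (unfold al, g, be; pose proof (htri v u p); pose proof (hsym u v); pose proof (hsym p u); lra).
  assert (Ht2 : g <= be + al) by (unfold al, g, be; pose proof (htri u p v); pose proof (hsym u p); pose proof (hsym p v); lra).
  assert (Ht3 : be <= al + g) by (unfold al, g, be; pose proof (htri p v u); pose proof (hsym u v); pose proof (hsym v p); lra).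
  pose proof PI_gt as HPI.
  destruct (hgeo v p) as [c2 Hc2]. { fold al; lra. }
  destruct (hgeo p u) as [c3 Hc3]. { fold be; lra. }
  set (h := g / 2).
  assert (Hh : 0 < h < PI/4) by (unfold h; lra).
  assert (sh : 0 < sin h) by (apply sin_gt_0; lra).
  assert (ch : 0 < cos h) by (apply cos_gt_0; lra).
  assert (eg : g = 2 * h) by (unfold h; lra).
  assert (sg : sin g = 2 * sin h * cos h) by (rewrite eg; apply sin_2a).
  assert (cg : cos g = 2 * cos h * cos h - 1) by (rewrite eg; apply cos_2a_cos).
  assert (sgp : 0 < sin g) by (rewrite sg; nra).
  set (y := (cos al - cos g * cos be) / sin g).
  assert (Hy : y * sin g = cos al - cos g * cos be) by (unfold y; field; lra).
  assert (sb : 0 <= sin be) by (apply sin_ge_0; lra).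
  assert (Hlo : cos (g + be) <= cos al) by (apply cos_le_mono; lra).
  assert (Hhi : cos al <= cos g * cos be + sin g * sin be).
  { destruct (Rle_dec be g).
    - rewrite <- cos_minus. apply cos_le_mono; lra.
    - replace (cos g * cos be + sin g * sin be) with (cos (be - g)) by (rewrite cos_minus; ring).
      apply cos_le_mono; lra. }
  rewrite cos_plus in Hlo.
  assert (Hsq : y * y <= sin be * sin be).
  { assert (HS : 0 <= sin g * sin be) by nra.
    assert (Habs : (y * sin g) * (y * sin g) <= (sin g * sin be) * (sin g * sin be)) by (rewrite Hy; nra).
    apply (Rmult_le_reg_r (sin g * sin g)); [nra|]. nra. }
  assert (Hsc : forall x, sin x * sin x + cos x * cos x = 1).
  { intro x. pose proof (sin2_cos2 x). unfold Rsqr in *. lra. }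
  set (zz := sqrt (1 - cos be * cos be - y * y)).
  assert (Hzz : zz * zz = 1 - cos be * cos be - y * y).
  { unfold zz. apply sqrt_sqrt. pose proof (Hsc be). lra. }
  set (ub := (1, 0, 0) : R3).
  set (vb := (cos g, sin g, 0) : R3).
  set (pb := (cos be, y, zz) : R3).
  set (mb := (cos h, sin h, 0) : R3).
  assert (Sub : on_S2 ub) by (unfold on_S2, ub, dot3; ring).
  assert (Svb : on_S2 vb) by (unfold on_S2, vb, dot3; pose proof (Hsc g); lra).
  assert (Spb : on_S2 pb) by (unfold on_S2, pb, dot3; lra).
  assert (Smb : on_S2 mb) by (unfold on_S2, mb, dot3; pose proof (Hsc h); lra).
  assert (Ekey : dot3 mb pb = (cos al + cos be) / (2 * cos h)).
  { unfold mb, pb, dot3. apply (Rmult_eq_reg_r (2 * cos h)); [|lra].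
    unfold Rdiv. rewrite Rmult_assoc, Rinv_l by lra.
    rewrite sg, cg in Hy. nra. }
  assert (Hc := hcmp u v p c1 c2 c3 Hc1 Hc2 Hc3).
  specialize (Hc ltac:(fold g al be; lra) ub vb pb Sub Svb Spb).
  assert (E1 : dS2 ub vb = d u v).
  { unfold dS2, ub, vb, dot3. replace (1 * cos g + 0 * sin g + 0 * 0) with (cos g) by ring.
    apply acos_cos; fold g; lra. }
  assert (E2 : dS2 vb pb = d v p).
  { unfold dS2, vb, pb, dot3. replace (cos g * cos be + sin g * y + 0 * zz) with (cos al) by lra.
    apply acos_cos; fold al; lra. }
  assert (E3 : dS2 pb ub = d p u).
  { unfold dS2, ub, pb, dot3. replace (cos be * 1 + y * 0 + zz * 0) with (cos be) by ring.
    apply acos_cos; fold be; lra. }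
  specialize (Hc E1 E2 E3 (c1 h) p mb pb).
  assert (T1 : tri_pt d u v p c1 c2 c3 ub vb pb (c1 h) mb).
  { exists h. left. split; [fold g; lra|]. split; [reflexivity|].
    unfold cmp_pt. split; [exact Smb|]. fold g. split.
    - unfold dS2, ub, mb, dot3. replace (1 * cos h + 0 * sin h + 0 * 0) with (cos h) by ring.
      apply acos_cos; lra.
    - unfold dS2, vb, mb, dot3. replace (cos h * cos g + sin h * sin g + 0 * 0) with (cos (g - h)).
      + replace (g - h) with h by lra. apply acos_cos; lra.
      + rewrite cos_minus. ring. }
  assert (T2 : tri_pt d u v p c1 c2 c3 ub vb pb p pb).
  { exists 0. right; right. destruct Hc3 as [H30 [H31 _]]. split; [fold be; lra|].
    split; [congruence|]. unfold cmp_pt. split; [exact Spb|]. split.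
    - unfold dS2. rewrite Spb. apply acos_1.
    - fold be. rewrite Rminus_0_r. exact E3. }
  specialize (Hc T1 T2).
  unfold dS2 in Hc. rewrite Ekey in Hc.
  assert (Hdb : -1 <= (cos al + cos be) / (2 * cos h) <= 1) by (rewrite <- Ekey; apply dot_bound; auto).
  pose proof (acos_bound ((cos al + cos be) / (2 * cos h))).
  assert (Hpm : cos (acos ((cos al + cos be) / (2 * cos h))) <= cos (d (c1 h) p)).
  { apply cos_le_mono; auto. lra. }
  rewrite cos_acos in Hpm by lra.
  rewrite (hsym (c1 h) p) in Hpm. rewrite Hsym1. fold be.
  apply (Rmult_le_compat_l (2 * cos h)) in Hpm; [|lra].
  replace (2 * cos h * ((cos al + cos be) / (2 * cos h))) with (cos al + cos be) in Hpm by (field; lra).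
  lra.
Qed.
End Geo.

Lemma cos_shift a e : 0 <= a <= PI/2 -> 0 <= e <= 1 -> cos a - 2 * e <= cos (a + e).
Proof.
  intros Ha He. pose proof PI2_1.
  rewrite cos_plus.
  assert (se : sin e <= e) by (destruct (Req_dec e 0) as [->|]; [rewrite sin_0; lra| left; apply sin_lt_x; lra]).
  assert (se2 : sin (e/2) <= e/2) by (destruct (Req_dec e 0) as [->|]; [replace (0/2) with 0 by lra; rewrite sin_0; lra| left; apply sin_lt_x; lra]).
  assert (se2p : 0 <= sin (e/2)) by (apply sin_ge_0; lra).
  assert (se2b : sin (e/2) <= 1) by apply SIN_bound.
  assert (ce : cos e = 1 - 2 * sin (e/2) * sin (e/2)) by (rewrite <- cos_2a_sin; f_equal; lra).
  assert (ca0 : 0 <= cos a) by (apply cos_ge_0; lra).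
  assert (ca1 : cos a <= 1) by apply COS_bound.
  assert (sa0 : 0 <= sin a) by (apply sin_ge_0; lra).
  assert (sa1 : sin a <= 1) by apply SIN_bound.
  assert (sep : 0 <= sin e) by (apply sin_ge_0; lra).
  assert (h1 : 1 - cos e <= e) by nra.
  assert (h2 : cos a * (1 - cos e) <= e) by nra.
  assert (h3 : sin a * sin e <= e) by nra.
  nra.
Qed.

Section Main.
Variables (X : Type) (d : X -> X -> R) (T : X -> X).
Hypothesis hcat : CAT1_space d.
Hypothesis hadm : admissible d.
Hypothesis hcomp : complete d.
Hypothesis hT : vicinal d T.
Variable x : X.
Let xs n := Nat.iter n T x.
Variables (y0 : X) (c0 : R) (N0 : nat).
Hypothesis hc0 : c0 < PI / 2.
Hypothesis Hb : forall n, (n >= N0)%nat -> d (xs n) y0 <= c0.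
Variable c : R.
Hypothesis hc : c < PI / 2.
Hypothesis Hstep : forall n : nat, d (Nat.iter (S n) T x) (Nat.iter n T x) <= c.

Definition Lp (z : X) (t : R) : Prop :=
  exists N, forall n, (n >= N)%nat -> t <= cos (d (Nat.iter n T x) z).

Lemma hpos' : forall a b, 0 <= d a b.
Proof. destruct hcat as [[h _] _]. exact h. Qed.

Lemma Ldown z t t' : Lp z t -> t' <= t -> Lp z t'.
Proof. intros [N H] h. exists N. intros n hn. specialize (H n hn). lra. Qed.

Lemma Lbound z t : Lp z t -> t <= 1.
Proof. intros [N H]. specialize (H N (le_n _)). pose proof (COS_bound (d (Nat.iter N T x) z)). lra. Qed.

Lemma Lmid u v t : Lp u t -> Lp v t -> 0 < d u v -> exists m, Lp m (t / cos (d u v / 2)).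
Proof.
  intros [N1 H1] [N2 H2] hg.
  destruct (midpoint_ineq X d hcat hadm u v hg) as [m Hm].
  exists m. exists (max N1 N2). intros n hn.
  specialize (H1 n ltac:(lia)). specialize (H2 n ltac:(lia)). specialize (Hm (Nat.iter n T x)).
  assert (hh : 0 < cos (d u v / 2)).
  { apply cos_gt_0; pose proof (hadm u v); lra. }
  apply (Rmult_le_reg_r (2 * cos (d u v / 2))); [lra|].
  replace (t / cos (d u v / 2) * (2 * cos (d u v / 2))) with (2 * t) by (field; lra).
  lra.
Qed.

Let E t := exists z, Lp z t.

Lemma c0_nonneg : 0 <= c0.
Proof. pose proof (Hb N0 (le_n _)). pose proof (hpos' (xs N0) y0). lra. Qed.

Lemma E_ne : E (cos c0).
Proof.
  exists y0. exists N0. intros n hn. apply cos_le_mono.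
  - apply hpos'.
  - apply Hb; auto.
  - pose proof c0_nonneg; pose proof PI_RGT_0; lra.
Qed.

Definition sdef : {m : R | is_lub E m}.
Proof.
  apply completeness.
  - exists 1. intros t [z Hz]. eapply Lbound; eauto.
  - exists (cos c0). apply E_ne.
Defined.

Let s := proj1_sig sdef.

Lemma s_pos : 0 < s.
Proof.
  unfold s. destruct sdef as [m [H1 H2]]; simpl.
  pose proof (H1 _ E_ne). assert (0 < cos c0) by (apply cos_gt_0; pose proof c0_nonneg; lra). lra.
Qed.

Lemma Hs1 z t : Lp z t -> t <= s.
Proof. unfold s. destruct sdef as [m [H1 H2]]; simpl. intros. apply H1. exists z; auto. Qed.

Lemma Hs2 eps : 0 < eps -> exists z, Lp z (s - eps).
Proof.
  intros he. apply NNPP. intros Hn.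
  unfold s in *. destruct sdef as [m [H1 H2]]; simpl in *.
  assert (is_upper_bound E (m - eps)).
  { intros t [z Hz]. destruct (Rle_dec t (m - eps)); auto.
    exfalso. apply Hn. exists z. eapply Ldown; eauto. lra. }
  specialize (H2 _ H). lra.
Qed.

Lemma Kmid u v t : Lp u t -> Lp v t -> 0 < d u v -> t <= s * cos (d u v / 2).
Proof.
  intros H1 H2 hg. destruct (Lmid u v t H1 H2 hg) as [m Hm].
  apply Hs1 in Hm.
  assert (hh : 0 < cos (d u v / 2)).
  { apply cos_gt_0; pose proof (hadm u v); lra. }
  apply (Rmult_le_compat_r (cos (d u v / 2))) in Hm; [|lra].
  replace (t / cos (d u v / 2) * cos (d u v / 2)) with t in Hm by (field; lra).
  lra.
Qed.


Lemma Hs2' k : exists z, Lp z (s - / INR (S k)).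
Proof. apply Hs2. apply Rinv_0_lt_compat. apply lt_0_INR. lia. Qed.

Definition zk (k : nat) : X := proj1_sig (constructive_indefinite_description _ (Hs2' k)).

Lemma zk_spec k : Lp (zk k) (s - / INR (S k)).
Proof. unfold zk. destruct constructive_indefinite_description; simpl; auto. Qed.

Lemma zk_spec2 N k : (0 < N)%nat -> (N <= k)%nat -> Lp (zk k) (s - / INR N).
Proof.
  intros h1 h2. eapply Ldown; [apply zk_spec|].
  assert (/ INR (S k) <= / INR N).
  { apply Rinv_le_contravar. apply lt_0_INR; lia. apply le_INR; lia. }
  lra.
Qed.

Lemma zk_cauchy : forall eps, eps > 0 -> exists N, forall m n, (m >= N)%nat -> (n >= N)%nat ->
        d (zk m) (zk n) < eps.
Proof.
  intros eta heta.
  set (e1 := Rmin eta 1).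
  assert (he1 : 0 < e1 <= 1) by (unfold e1; unfold Rmin; destruct Rle_dec; lra).
  assert (e1le : e1 <= eta) by (unfold e1; apply Rmin_l).
  pose proof PI2_1.
  assert (hcos : cos (e1 / 2) < 1).
  { rewrite <- cos_0. apply cos_decreasing_1; lra. }
  pose proof s_pos.
  destruct (archimed_cor1 (s * (1 - cos (e1/2)))) as [N [HN HN0]].
  { apply Rmult_lt_0_compat; lra. }
  exists N. intros m n hm hn.
  pose proof (zk_spec2 N m HN0 hm) as Hm.
  pose proof (zk_spec2 N n HN0 hn) as Hn.
  destruct (Req_dec (d (zk m) (zk n)) 0) as [h0|h0]; [rewrite h0; lra|].
  assert (hg : 0 < d (zk m) (zk n)) by (pose proof (hpos' (zk m) (zk n)); lra).
  pose proof (Kmid _ _ _ Hm Hn hg) as K.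
  pose proof (hadm (zk m) (zk n)).
  destruct (Rlt_le_dec (d (zk m) (zk n)) e1) as [|hge]; [lra|].
  assert (cos (d (zk m) (zk n) / 2) <= cos (e1 / 2)) by (apply cos_le_mono; lra).
  nra.
Qed.

Lemma zlim : exists z, forall eps, eps > 0 -> exists N, forall n, (n >= N)%nat -> d (zk n) z < eps.
Proof. apply hcomp. apply zk_cauchy. Qed.

Lemma Lz z : (forall eps, eps > 0 -> exists N, forall n, (n >= N)%nat -> d (zk n) z < eps) ->
  forall t, t < s -> Lp z t.
Proof.
  intros Hz t ht.
  set (eta := s - t).
  set (e := Rmin (eta / 4) 1).
  assert (he : 0 < e <= 1) by (unfold e; unfold Rmin; destruct Rle_dec; unfold eta in *; lra).
  assert (he2 : e <= eta / 4) by (unfold e; apply Rmin_l).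
  destruct (Hz e ltac:(lra)) as [K HK].
  destruct (archimed_cor1 (eta / 2)) as [N [HN HN0]]. { unfold eta; lra. }
  set (k := max K N).
  pose proof (zk_spec2 N k HN0 ltac:(unfold k; lia)) as [M HM].
  specialize (HK k ltac:(unfold k; lia)).
  exists M. intros n hn. specialize (HM n hn).
  destruct hcat as [[hpos [_ [hsym htri]]] _].
  set (a := d (Nat.iter n T x) (zk k)) in *.
  assert (ha : 0 <= a < PI/2) by (split; [apply hpos| apply hadm]).
  pose proof PI2_1.
  pose proof (htri (Nat.iter n T x) (zk k) z).
  assert (cos (a + e) <= cos (d (Nat.iter n T x) z)).
  { apply cos_le_mono; [apply hpos| unfold a; lra| lra]. }
  pose proof (cos_shift a e ltac:(lra) ltac:(lra)).
  unfold eta in *. lra.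
Qed.

Lemma s_le1 : s <= 1.
Proof. unfold s. destruct sdef as [m [H1 H2]]; simpl. apply H2. intros u [v Hv]. eapply Lbound; eauto. Qed.

Lemma LTz z : (forall t, t < s -> Lp z t) -> forall t, t < s -> Lp (T z) t.
Proof.
  intros Hz t ht.
  pose proof s_pos as sp.
  pose proof s_le1 as s1.
  set (t' := (t + s) / 2).
  destruct (Hz t' ltac:(unfold t'; lra)) as [N1 H1].
  destruct hcat as [[hpos [_ [hsym htri]]] _].
  assert (c_nn : 0 <= c) by (pose proof (Hstep 0); pose proof (hpos (Nat.iter 1 T x) (Nat.iter 0 T x)); lra).
  pose proof PI_RGT_0.
  assert (cc : 0 < cos c) by (apply cos_gt_0; lra).
  set (ka := cos c * cos c).
  set (q := 1 - ka / 4).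
  assert (ka1 : 0 < ka <= 1) by (unfold ka; pose proof (COS_bound c); nra).
  set (w n := cos (d (Nat.iter n T x) (T z))).
  set (ee n := Rmax 0 (t' - w n)).
  assert (ee0 : forall n, 0 <= ee n) by (intro n; unfold ee; apply Rmax_l).
  assert (step : forall n, (n >= N1)%nat -> ee (S n) <= q * ee n).
  { intros n hn.
    pose proof (hT (Nat.iter n T x) z) as V. cbv zeta in V.
    change (T (Nat.iter n T x)) with (Nat.iter (S n) T x) in V.
    set (a := cos (d (Nat.iter (S n) T x) (Nat.iter n T x)) ^ 2) in V.
    set (b := cos (d (T z) z) ^ 2) in V.
    assert (ha : ka <= a <= 1).
    { unfold a, ka. pose proof (Hstep n).
      assert (cos c <= cos (d (Nat.iter (S n) T x) (Nat.iter n T x))) by (apply cos_le_mono; [apply hpos|lra|lra]).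
      pose proof (COS_bound (d (Nat.iter (S n) T x) (Nat.iter n T x))). rewrite <- Rsqr_pow2; unfold Rsqr; split; nra. }
    assert (hb : 0 <= b <= 1).
    { unfold b. pose proof (COS_bound (d (T z) z)). rewrite <- Rsqr_pow2; unfold Rsqr; split; nra. }
    specialize (H1 (S n) ltac:(lia)).
    rewrite (hsym (T z) (Nat.iter n T x)) in V.
    fold (w (S n)) in V. fold (w n) in V.
    set (A := a * (1 + b)) in V. set (B := b * (1 + a)) in V.
    assert (hA : ka <= A) by (unfold A; nra).
    assert (hAB : A + B <= 4) by (unfold A, B; nra).
    assert (hB : 0 <= B) by (unfold B; nra).
    assert (ineq : (A + B) * (t' - w (S n)) <= B * ee n).
    { assert (t' - w n <= ee n) by (unfold ee; apply Rmax_r). nra. }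
    unfold ee at 1. apply Rmax_lub.
    - unfold q. pose proof (ee0 n). nra.
    - assert (B * ee n <= (A + B) * (q * ee n)).
      { assert (hq : (A + B) * q - B >= 0) by (unfold q; nra). pose proof (ee0 n). nra. }
      apply (Rmult_le_reg_l (A + B)); nra. }
  assert (iter : forall k, ee (N1 + k)%nat <= q ^ k * ee N1).
  { induction k. - simpl. rewrite Nat.add_0_r. lra.
    - replace (N1 + S k)%nat with (S (N1 + k)) by lia.
      pose proof (step (N1 + k)%nat ltac:(lia)). simpl.
      assert (0 <= q) by (unfold q; lra). nra. }
  assert (eN : ee N1 <= 2).
  { unfold ee, w. apply Rmax_lub; [lra|]. pose proof (COS_bound (d (Nat.iter N1 T x) (T z))). unfold t'. lra. }
  destruct (pow_lt_1_zero q ltac:(unfold q; rewrite Rabs_pos_eq; lra) ((t' - t) / 4) ltac:(unfold t'; lra)) as [K HK].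
  exists (N1 + K)%nat. intros n hn.
  replace n with (N1 + (n - N1))%nat by lia.
  pose proof (iter (n - N1)%nat).
  specialize (HK (n - N1)%nat ltac:(lia)).
  rewrite Rabs_pos_eq in HK by (apply pow_le; unfold q; lra).
  assert (q ^ (n - N1) * ee N1 <= q ^ (n - N1) * 2) by (apply Rmult_le_compat_l; [apply pow_le; unfold q; lra | exact eN]).
  assert (ee (N1 + (n - N1))%nat < t' - t) by (unfold t' in *; lra).
  assert (t' - w (N1 + (n - N1))%nat <= ee (N1 + (n - N1))%nat) by (unfold ee; apply Rmax_r).
  unfold w in *. lra.
Qed.

Lemma fixpt : exists u, T u = u.
Proof.
  destruct zlim as [z Hz].
  pose proof (Lz z Hz) as L1. pose proof (LTz z L1) as L2.
  exists z. destruct hcat as [[hpos [hzero [hsym htri]]] _].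
  destruct (Req_dec (d z (T z)) 0) as [h0|h0].
  - symmetry. apply hzero. exact h0.
  - exfalso. assert (hg : 0 < d z (T z)) by (pose proof (hpos z (T z)); lra).
    pose proof (hadm z (T z)). pose proof PI2_1. pose proof s_pos.
    assert (hc1 : cos (d z (T z) / 2) < 1) by (rewrite <- cos_0; apply cos_decreasing_1; lra).
    set (t := s * (1 + cos (d z (T z) / 2)) / 2).
    assert (Ht : t < s) by (unfold t; nra).
    pose proof (Kmid z (T z) t (L1 t Ht) (L2 t Ht) hg) as KK. unfold t in KK. nra.
Qed.

End Main.

Theorem theorem4p1 (X : Type) (d : X -> X -> R) (T : X -> X)
  (hcat : CAT1_space d) (hadm : admissible d) (hcomp : complete d)
  (hT : vicinal d T) :
  (exists u, Fix T u) <->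
  (exists x,
     spherically_bounded d (fun n => Nat.iter n T x) /\
     exists c, c < PI / 2 /\
       forall n : nat, d (Nat.iter (S n) T x) (Nat.iter n T x) <= c).
Proof.
  split.
  - intros [u Hu]. unfold Fix in Hu.
    destruct hcat as [[hpos [hzero [hsym htri]]] _].
    assert (It : forall n, Nat.iter n T u = u).
    { induction n; simpl; [reflexivity| rewrite IHn; exact Hu]. }
    assert (d u u = 0) by (apply hzero; reflexivity).
    pose proof PI_RGT_0.
    exists u. split.
    + exists u, 0. split; [lra|]. exists 0%nat. intros n _. rewrite It. lra.
    + exists 0. split; [lra|]. intros n. rewrite It, It. lra.
  - intros [x [[y0 [c0 [hc0 [N0 Hb]]]] [c [hc Hstep]]]].
    exact (fixpt X d T hcat hadm hcomp hT x y0 c0 N0 hc0 Hb c hc Hstep).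
Qed.
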